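(* Let $p\in(0,1)$ be fixed, let $C$ be a positive integer, and let $\mathcal{E}\subset[n]^2$ be such that, for every $i\in[n]$, $$ \left|\{j\in[n]:(i,j)\in\mathcal{E}\}\right|\leqslant C,\qquad \left|\{j\in[n]:(j,i)\in\mathcal{E}\}\right|\leqslant C. $$ Then the probability that there exists a perfect matching in $G(n,n,p)$ containing no edge from $\mathcal{E}$ is $1-e^{-\Omega(n)}$.
   Context: $G(n,n,p)$ is the random bipartite graph obtained from the complete bipartite graph $K_{n,n}$, whose two parts are each identified with $[n]$, by keeping each edge independently with probability $p$; a pair $(i,j)\in[n]^2$ is identified with the edge between vertex $i$ of the first part and vertex $j$ of the second part. $\Omega(n)$ refers to $n\to\infty$ with $p$ and $C$ fixed. *)

(* Defs.v *)
From mathcomp Require Import all_boot all_order all_fingroup all_algebra.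
From mathcomp Require Import reals sequences exp.
Set Implicit Arguments. Unset Strict Implicit. Unset Printing Implicit Defensive.
Import Order.TTheory GRing.Theory Num.Theory.
Local Open Scope ring_scope.

(* A bipartite graph on parts [n] x [n] = set of pairs (i,j): edge between
   vertex i of the first part and vertex j of the second part. *)
Definition bgraph (n : nat) := {set 'I_n * 'I_n}.

(* Probability of the outcome G under G(n,n,p): each of the n^2 edges
   kept independently with probability p. *)
Definition Gnnp_weight (R : realType) (p : R) (n : nat) (G : bgraph n) : R :=
  p ^+ #|G| * (1 - p) ^+ (n * n - #|G|)%N.

Definition Gnnp_prob (R : realType) (p : R) (n : nat) (A : pred (bgraph n)) : R :=
  \sum_(G : bgraph n | A G) Gnnp_weight p G.

Definition has_pm_avoiding (n : nat) (E : bgraph n) (G : bgraph n) : bool :=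
  [exists s : {perm 'I_n}, [forall i, ((i, s i) \in G) && ((i, s i) \notin E)]].

Definition deg_bounded (n C : nat) (E : bgraph n) : Prop :=
  forall i : 'I_n,
    (#|[set j : 'I_n | (i, j) \in E]| <= C)%N /\
    (#|[set j : 'I_n | (j, i) \in E]| <= C)%N.

(* Main.v *)
Require Import Defs.
From mathcomp Require Import all_boot all_order all_fingroup all_algebra.
From mathcomp Require Import reals sequences exp zify ring lra.
Import Order.TTheory GRing.Theory Num.Theory.
Local Open Scope ring_scope.
Set Implicit Arguments. Unset Strict Implicit. Unset Printing Implicit Defensive.

Lemma sum_sets (R : comPzRingType) (T : finType) (F : {set T}) (a b : R) :
  \sum_(G : {set T} | [disjoint G & F]) a ^+ #|G| * b ^+ (#|T| - #|G|) =
  b ^+ #|F| * (a + b) ^+ (#|T| - #|F|).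
Proof.
pose h (t : T) (bb : bool) := if bb then (if t \in F then 0 else a) else b.
have step1 : forall G : {set T},
  (if [disjoint G & F] then a ^+ #|G| * b ^+ (#|T| - #|G|) else 0) =
  \prod_(t : T) h t (t \in G).
  move=> G; case: ifP => [dis | ndis].
    rewrite (bigID (mem G)) /=.
    rewrite (eq_bigr (fun _ => a)); last first.
      move=> t tG; rewrite /h tG.
      move: dis; rewrite disjoints_subset => /subsetP sub.
      by have := sub t tG; rewrite inE => /negbTE ->.
    rewrite [X in _ = _ * X](eq_bigr (fun _ => b)); last by move=> t /negbTE tG; rewrite /h tG.
    rewrite !prodr_const; congr (_ * _ ^+ _).
    by rewrite -(cardsC G) addKn; apply: eq_card => t; rewrite !inE.
  move/negbT: ndis; rewrite disjoints_subset => /subsetPn [t tG]; rewrite inE negbK => tF.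
  by rewrite (bigD1 t) //= /h tG tF mul0r.
rewrite big_mkcond /= (eq_bigr _ (fun G _ => step1 G)).
transitivity (\sum_(f : {ffun T -> bool}) \prod_(t : T) h t (f t)).
  rewrite (reindex (fun f : {ffun T -> bool} => [set t | f t])) /=; last first.
    exists (fun G : {set T} => [ffun t => t \in G]) => [f _ | G _].
      by apply/ffunP => t; rewrite ffunE inE.
    by apply/setP => t; rewrite !inE ffunE.
  by apply: eq_bigr => f _; apply: eq_bigr => t _; rewrite inE.
rewrite -(bigA_distr_bigA h).
rewrite (eq_bigr (fun t => h t true + h t false)); last by move=> t _; rewrite big_bool.
rewrite (bigID (mem F)) /=.
rewrite (eq_bigr (fun _ => b)); last by move=> t tF; rewrite /h tF add0r.
rewrite [X in _ * X = _](eq_bigr (fun _ => a + b)); last by move=> t /negbTE tF; rewrite /h tF.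
rewrite !prodr_const; congr (_ * _ ^+ _).
by rewrite -(cardsC F) addKn; apply: eq_card => t; rewrite !inE.
Qed.

Lemma card_pairs n : #|{: 'I_n * 'I_n}| = (n * n)%N.
Proof. by rewrite card_prod card_ord. Qed.

Lemma prob_disj (R : realType) (p : R) n (F : bgraph n) :
  \sum_(G : bgraph n | [disjoint G & F]) Gnnp_weight p G = (1 - p) ^+ #|F|.
Proof.
rewrite /Gnnp_weight -card_pairs.
by rewrite (sum_sets F p (1 - p)) addrCA subrr addr0 expr1n mulr1.
Qed.

Lemma prob_total (R : realType) (p : R) n :
  \sum_(G : bgraph n) Gnnp_weight p G = 1.
Proof.
rewrite -(expr0 (1 - p)) -(@cards0 ('I_n * 'I_n)%type) -(prob_disj p set0).
by apply: eq_bigl => G; rewrite disjoints_subset setC0 subsetT.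
Qed.

Lemma wge0 (R : realType) (p : R) n (G : bgraph n) : 0 <= p <= 1 -> 0 <= Gnnp_weight p G.
Proof.
by case/andP => p0 p1; rewrite /Gnnp_weight mulr_ge0 // exprn_ge0 // subr_ge0.
Qed.

Lemma UB (R : realType) (p : R) n (K : finType) (P : pred K) (F : K -> bgraph n)
  (B : pred (bgraph n)) : 0 <= p <= 1 ->
  (forall G, B G -> exists k, P k && [disjoint G & F k]) ->
  \sum_(G | B G) Gnnp_weight p G <= \sum_(k | P k) (1 - p) ^+ #|F k|.
Proof.
move=> hp HB.
rewrite (eq_bigr (fun k => \sum_(G : bgraph n) ([disjoint G & F k])%:R * Gnnp_weight p G)); last first.
  move=> k _; rewrite -prob_disj big_mkcond /=; apply: eq_bigr => G _.
  by case: ifP; rewrite ?mul1r ?mul0r.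
rewrite exchange_big /= big_mkcond /=; apply: ler_sum => G _.
rewrite -mulr_suml.
have S0 : 0 <= \sum_(k | P k) ([disjoint G & F k])%:R :> R.
  by apply: sumr_ge0 => k _; rewrite ler0n.
case: ifP => BG; last by rewrite mulr_ge0 // wge0.
apply: ler_peMl; first exact: wge0.
have [k /andP [Pk dk]] := HB G BG.
rewrite (bigD1 k) //= dk lerDl; apply: sumr_ge0 => i _; exact: ler0n.
Qed.
Section Comb.
Variables (n C d : nat) (E : bgraph n).
Hypothesis HE : deg_bounded C E.

Definition Erow (u : 'I_n) := [set j | (u, j) \in E].
Definition Ecol (v : 'I_n) := [set i | (i, v) \in E].
Definition Frow (u : 'I_n) (U : {set 'I_n}) : bgraph n := [set (u, j) | j in ~: U :\: Erow u].
Definition Fcol (v : 'I_n) (U : {set 'I_n}) : bgraph n := [set (i, v) | i in ~: U :\: Ecol v].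
Definition Frect (S T : {set 'I_n}) : bgraph n := setX S T :\: E.

Lemma cardD_ge (A B : {set 'I_n}) : (#|A| - #|B| <= #|A :\: B|)%N.
Proof. by rewrite cardsD leq_sub2l // subset_leq_card // subsetIr. Qed.

Lemma cardC_n (U : {set 'I_n}) : #|~: U| = (n - #|U|)%N.
Proof. by have := cardsC U; rewrite card_ord => H; lia. Qed.

Lemma card_Frow (u : 'I_n) (U : {set 'I_n}) : (n - #|U| - C <= #|Frow u U|)%N.
Proof.
rewrite /Frow card_imset; last by move=> a b [].
apply: leq_trans (cardD_ge _ _); rewrite cardC_n leq_sub2l //.
by have [] := HE u.
Qed.

Lemma card_Fcol (v : 'I_n) (U : {set 'I_n}) : (n - #|U| - C <= #|Fcol v U|)%N.
Proof.
rewrite /Fcol card_imset; last by move=> a b [].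
apply: leq_trans (cardD_ge _ _); rewrite cardC_n leq_sub2l //.
by have [] := HE v.
Qed.

Lemma card_pair_sum (A : bgraph n) : #|A| = (\sum_i #|[set j | (i, j) \in A]|)%N.
Proof.
rewrite -sum1_card big_mkcond /=.
pose f := (fun i j => if (i, j) \in A then 1 else 0)%N.
rewrite (eq_bigr (fun e => f e.1 e.2)); last by case.
rewrite -(pair_bigA _ f) /=; apply: eq_bigr => i _.
by rewrite -sum1_card [in RHS]big_mkcond; apply: eq_bigr => j _; rewrite inE.
Qed.

Lemma card_Frect (S T : {set 'I_n}) : (#|S| * (#|T| - C) <= #|Frect S T|)%N.
Proof.
rewrite card_pair_sum (bigID (mem S)) /=.
apply: leq_trans (leq_addr _ _).
rewrite -sum_nat_const; apply: leq_sum => i iS.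
have -> : [set j | (i, j) \in Frect S T] = T :\: Erow i.
  by apply/setP => j; rewrite !inE iS /= andbC.
apply: leq_trans (cardD_ge _ _); rewrite leq_sub2l //.
by have [] := HE i.
Qed.
End Comb.
Set Implicit Arguments. Unset Strict Implicit. Unset Printing Implicit Defensive.

Section DL.
Variables (n : nat) (E G : bgraph n).
Definition Hb (i j : 'I_n) := ((i, j) \in G) && ((i, j) \notin E).
Definition good (s : {perm 'I_n}) := [set i | Hb i (s i)].

Lemma DL (d : nat) :
  (forall u, (d <= #|[set j | Hb u j]|)%N) ->
  (forall v, (d <= #|[set i | Hb i v]|)%N) ->
  (forall S T : {set 'I_n}, (d <= #|S|)%N -> (d <= #|T|)%N ->
      exists s, exists t, [/\ s \in S, t \in T & Hb s t]) ->
  has_pm_avoiding E G.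
Proof.
move=> Hr Hc Hrect.
have [s _ Hmax] := @arg_maxnP _ 1%g xpredT (fun s => #|good s|) isT.
case: (boolP [forall i, i \in good s]) => [/forallP all | ].
  by apply/existsP; exists s; apply/forallP => i; have := all i; rewrite inE.
rewrite negb_forall => /existsP [u]; rewrite inE => Hu.
set X := [set (s^-1)%g j | j in [set j | Hb u j]].
set Y := [set s i | i in [set i | Hb i (s u)]].
have [x [t [Hx Ht Hxt]]] : exists x, exists t, [/\ x \in X, t \in Y & Hb x t].
  apply: Hrect.
    by rewrite card_imset; [exact: Hr | exact: perm_inj].
  by rewrite card_imset; [exact: Hc | exact: perm_inj].
case/imsetP: Hx Hxt => j; rewrite inE => Huj -> Hxt.
case/imsetP: Ht Hxt => y; rewrite inE => Hyu -> Hxt.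
set x' := (s^-1)%g j in Hxt *.
have sx : s x' = j by rewrite /x' permKV.
have ux : u != x' by apply/eqP => E1; move: Hu; rewrite {2}E1 sx Huj.
have uy : u != y by apply/eqP => E1; move: Hu; rewrite {1}E1 Hyu.
set tau := (tperm x' y * tperm u x')%g.
set s' := (tau * s)%g.
have Hs' : forall i, s' i = s (tau i) by move=> i; rewrite /s' permM.
have Htau : forall i, i != u -> i != x' -> i != y -> tau i = i.
  move=> i iu ix iy; rewrite /tau permM tpermD 1?eq_sym // tpermD // eq_sym //.
have tu : tau u = x'.
  by rewrite /tau permM tpermD 1?eq_sym // tpermL.
have good_new : forall i, i \in [:: u; x'; y] -> Hb i (s' i).
  have txx : x' = y -> tau x' = u.
    by move=> exy; rewrite /tau permM -exy tpermR tpermR.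
  move=> i; rewrite !inE => /or3P [] /eqP ->; rewrite Hs'.
  - by rewrite tu sx.
  - case: (eqVneq x' y) => [exy | nxy].
      by rewrite txx // -exy in Hyu *.
    by rewrite /tau permM tpermL tpermD // eq_sym.
  - case: (eqVneq x' y) => [exy | nxy].
      by rewrite -exy txx // -exy in Hyu *.
    by rewrite /tau permM tpermR tpermR.
have : (#|good s| < #|good s'|)%N.
  apply: proper_card; apply/properP; split.
    apply/subsetP => i; rewrite !inE => Hi.
    case: (boolP (i \in [:: u; x'; y])) => [Hin | ]; first exact: good_new.
    rewrite !inE => /norP [iu /norP [ix iy]].
    by rewrite Hs' Htau.
  by exists u; rewrite !inE ?Hu //; apply: good_new; rewrite !inE eqxx.
by move=> H; have := Hmax s' isT; rewrite /geq /= leqNgt H.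
Qed.
End DL.

Section Cover.
Variables (n d : nat) (E : bgraph n).

Definition Kt := (('I_n * {set 'I_n}) + ('I_n * {set 'I_n}) + ({set 'I_n} * {set 'I_n}))%type.
Definition Fk (k : Kt) : bgraph n := match k with
 | inl (inl x) => Frow E x.1 x.2
 | inl (inr x) => Fcol E x.1 x.2
 | inr x => Frect E x.1 x.2 end.
Definition Pk (k : Kt) : bool := match k with
 | inl (inl x) => (#|x.2| < d)%N
 | inl (inr x) => (#|x.2| < d)%N
 | inr x => (d <= #|x.1|)%N && (d <= #|x.2|)%N end.

Lemma bad_cover (G : bgraph n) : ~~ has_pm_avoiding E G -> exists k, Pk k && [disjoint G & Fk k].
Proof.
move=> npm.
case: (boolP [forall u, (d <= #|[set j | Hb E G u j]|)%N]) => [/forallP Hr|]; last first.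
  rewrite negb_forall => /existsP [u]; rewrite -ltnNge => Hu.
  exists (inl (inl (u, [set j | Hb E G u j]))); rewrite /= Hu /=.
  rewrite disjoints_subset; apply/subsetP => e eG; rewrite inE; apply/imsetP => [[j]].
  rewrite !inE => /andP [njE njU] Ee; subst e.
  by move: njU; rewrite /Hb eG njE.
case: (boolP [forall v, (d <= #|[set i | Hb E G i v]|)%N]) => [/forallP Hc|]; last first.
  rewrite negb_forall => /existsP [v]; rewrite -ltnNge => Hv.
  exists (inl (inr (v, [set i | Hb E G i v]))); rewrite /= Hv /=.
  rewrite disjoints_subset; apply/subsetP => e eG; rewrite inE; apply/imsetP => [[i]].
  rewrite !inE => /andP [niE niU] Ee; subst e.
  by move: niU; rewrite /Hb eG niE.
case: (boolP [forall S : {set 'I_n}, forall T : {set 'I_n},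
   ((d <= #|S|)%N && (d <= #|T|)%N) ==> [exists s, exists t, [&& s \in S, t \in T & Hb E G s t]]]).
  move/forallP => Hx; exfalso; move/negP: npm; apply; apply: (DL (d := d)) => // S T dS dT.
  have := forallP (Hx S) T; rewrite dS dT /= => /existsP [s /existsP [t /and3P [sS tT Hst]]].
  by exists s, t.
rewrite negb_forall => /existsP [S]; rewrite negb_forall => /existsP [T].
rewrite negb_imply => /andP [dST]; rewrite negb_exists => /forallP Hn.
exists (inr (S, T)); rewrite /= dST /=.
rewrite disjoints_subset; apply/subsetP => -[s t] eG; rewrite inE; apply/negP.
rewrite !inE /= => /andP [nE /andP [sS tT]].
by have := Hn s; rewrite negb_exists => /forallP /(_ t); rewrite sS tT /Hb eG nE.
Qed.
End Cover.
Set Implicit Arguments. Unset Strict Implicit. Unset Printing Implicit Defensive.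

Lemma bern (R : realType) (x : R) n : 0 <= x -> 1 + n%:R * x <= (1 + x) ^+ n.
Proof.
move=> x0; elim: n => [|n IH]; first by rewrite mul0r addr0 expr0.
rewrite exprS -natr1.
have h : 0 <= n%:R * x by rewrite mulr_ge0 ?ler0n.
nra.
Qed.

Lemma row_term (R : realType) (q xL : R) (L K f m C n : nat) : 0 < q <= 1 -> (0 < L)%N -> 1 <= xL ->
  L%:R / q <= xL ^+ K -> (K * m <= n)%N -> (n <= f + C + m)%N ->
  q ^+ f <= (q * xL) ^+ n * (L%:R^-1) ^+ m / q ^+ C.
Proof.
move=> /andP [q0 q1] L0 xL1 hK hKm hn.
rewrite ler_pdivlMr ?exprn_gt0 //.
have h1 : q ^+ f * q ^+ C * q ^+ m <= q ^+ n.
  by rewrite -!exprD; apply: ler_wiXn2l => //; exact: ltW.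
have Lnz : (L%:R : R) != 0 by rewrite pnatr_eq0 -lt0n.
have h2 : (q^-1) ^+ m <= (L%:R^-1) ^+ m * xL ^+ n.
  have -> : q^-1 = L%:R^-1 * (L%:R / q) by rewrite mulrA mulVf // mul1r.
  rewrite exprMn; apply: ler_wpM2l; first by rewrite exprn_ge0 // invr_ge0 ler0n.
  apply: (@le_trans _ _ ((xL ^+ K) ^+ m)).
    have hq : 0 <= L%:R / q by rewrite divr_ge0 ?ler0n ?(ltW q0).
    apply: lerXn2r => //; rewrite ?nnegrE //; exact: le_trans hK.
  by rewrite -exprM; apply: ler_weXn2l.
have e : q ^+ f * q ^+ C = (q ^+ f * q ^+ C * q ^+ m) * (q^-1) ^+ m.
  by rewrite exprVn mulfK // expf_neq0 // gt_eqF.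
rewrite e exprMn.
apply: (@le_trans _ _ (q ^+ n * (q^-1) ^+ m)).
  by apply: ler_wpM2r => //; rewrite exprn_ge0 // invr_ge0 ltW.
rewrite -mulrA; apply: ler_wpM2l; first by rewrite exprn_ge0 // ltW.
by rewrite mulrC.
Qed.
Lemma key_ineq (R : realType) (n B t Y : R) : 0 <= n -> 0 < t -> 2 * B <= n * (t * t) ->
  1 + n * t <= Y -> 2 * n * B + 1 <= Y * Y.
Proof.
move=> n0 t0 h bY.
have a0 : 0 <= n * t by rewrite mulr_ge0 // ltW.
have h2 : (n * t) * (n * t) <= (Y - 1) * (Y - 1) by apply: ler_pM => //; lra.
have h3 : n * (2 * B) <= n * (n * (t * t)) by apply: ler_wpM2l.
have e : n * (n * (t * t)) = (n * t) * (n * t) by ring.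
lra.
Qed.

Lemma sum_sets_all (R : comPzRingType) (T : finType) (a b : R) :
  \sum_(G : {set T}) a ^+ #|G| * b ^+ (#|T| - #|G|) = (a + b) ^+ #|T|.
Proof.
have := sum_sets (set0 : {set T}) a b; rewrite cards0 expr0 mul1r subn0 => <-.
by apply: eq_bigl => G; rewrite disjoints_subset setC0 subsetT.
Qed.

Lemma sum_card_pow (R : comPzRingType) n (y : R) :
  \sum_(U : {set 'I_n}) y ^+ #|U| = (y + 1) ^+ n.
Proof.
have := sum_sets_all ('I_n) y 1; rewrite card_ord => <-.
by apply: eq_bigr => U _; rewrite expr1n mulr1.
Qed.

Lemma card_le_n n (U : {set 'I_n}) : (#|U| <= n)%N.
Proof. by have := max_card (mem U); rewrite card_ord. Qed.

Section Rows.
Variables (R : realType) (q xL : R) (n C d K L : nat) (E : bgraph n).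
Hypotheses (HE : deg_bounded C E) (q01 : 0 < q <= 1) (L0 : (0 < L)%N)
  (xLdef : xL = 1 + L%:R^-1) (hK : L%:R / q <= xL ^+ K) (K0 : (0 < K)%N) (dK : d = (n %/ K)%N).

Definition g := fun U : {set 'I_n} => (q * xL) ^+ n * (L%:R^-1) ^+ #|U| / q ^+ C.

Lemma xL1 : 1 <= xL.
Proof. by rewrite xLdef lerDl invr_ge0 ler0n. Qed.

Lemma g_ge0 U : 0 <= g U.
Proof.
case/andP: q01 => q0 _.
rewrite /g mulr_ge0 // ?mulr_ge0 ?exprn_ge0 ?invr_ge0 ?ler0n ?exprn_ge0 ?mulr_ge0 ?(ltW q0) //.
exact: le_trans xL1.
Qed.

Lemma sum_g : \sum_(x : 'I_n * {set 'I_n}) g x.2 = n%:R * ((q * xL) ^+ n * xL ^+ n / q ^+ C).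
Proof.
rewrite -(pair_bigA _ (fun _ U => g U)) /= sumr_const card_ord mulr_natl; congr (_ *+ _).
rewrite (eq_bigr (fun U : {set 'I_n} => (q * xL) ^+ n / q ^+ C * (L%:R^-1) ^+ #|U|)); last first.
  by move=> U _; rewrite /g mulrAC.
by rewrite -mulr_sumr sum_card_pow addrC -xLdef mulrAC.
Qed.

Lemma dom_sum (P : pred ('I_n * {set 'I_n})) :
  \sum_(x | P x) g x.2 <= \sum_(x : 'I_n * {set 'I_n}) g x.2.
Proof.
rewrite [X in _ <= X](bigID P) /= lerDl; apply: sumr_ge0 => x _; exact: g_ge0.
Qed.

Lemma rows_bound :
  \sum_(x : 'I_n * {set 'I_n} | (#|x.2| < d)%N) q ^+ #|Frow E x.1 x.2|
    <= n%:R * ((q * xL) ^+ n * xL ^+ n / q ^+ C).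
Proof.
rewrite -sum_g; apply: le_trans (dom_sum _); apply: ler_sum => x hx.
apply: (@row_term _ q xL L K) => //; first exact: xL1.
  by move: hx; rewrite dK => /ltnW; rewrite leq_divRL // mulnC.
have := card_Frow HE x.1 x.2; have := card_le_n x.2; set f := #|Frow E x.1 x.2|; set m := #|x.2|; lia.
Qed.

Lemma cols_bound :
  \sum_(x : 'I_n * {set 'I_n} | (#|x.2| < d)%N) q ^+ #|Fcol E x.1 x.2|
    <= n%:R * ((q * xL) ^+ n * xL ^+ n / q ^+ C).
Proof.
rewrite -sum_g; apply: le_trans (dom_sum _); apply: ler_sum => x hx.
apply: (@row_term _ q xL L K) => //; first exact: xL1.
  by move: hx; rewrite dK => /ltnW; rewrite leq_divRL // mulnC.
have := card_Fcol HE x.1 x.2; have := card_le_n x.2; set f := #|Fcol E x.1 x.2|; set m := #|x.2|; lia.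
Qed.
End Rows.

Lemma rect_bound (R : realType) (q : R) n C d M (E : bgraph n) :
  deg_bounded C E -> 0 < q <= 1 -> (M * n <= d * (d - C))%N ->
  \sum_(x : {set 'I_n} * {set 'I_n} | (d <= #|x.1|)%N && (d <= #|x.2|)%N)
     q ^+ #|Frect E x.1 x.2| <= (4 * q ^+ M) ^+ n.
Proof.
move=> HE /andP [q0 q1] hM.
have c0 : 0 <= q ^+ (M * n) by rewrite exprn_ge0 // ltW.
apply: (@le_trans _ _ (\sum_(x : {set 'I_n} * {set 'I_n} | (d <= #|x.1|)%N && (d <= #|x.2|)%N) q ^+ (M * n))).
  apply: ler_sum => x /andP [h1 h2]; apply: ler_wiXn2l => //; first exact: ltW.
  apply: leq_trans hM _; apply: leq_trans (card_Frect HE x.1 x.2).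
  by apply: leq_mul => //; apply: leq_sub2r.
apply: (@le_trans _ _ (\sum_(x : {set 'I_n} * {set 'I_n}) q ^+ (M * n))).
  by rewrite [X in _ <= X](bigID (fun x : {set 'I_n} * {set 'I_n} => (d <= #|x.1|)%N && (d <= #|x.2|)%N)) /= lerDl; apply: sumr_ge0.
have hs : \sum_(U : {set 'I_n}) (1 : R) = 2 ^+ n.
  by have := sum_card_pow n (1 : R); rewrite (eq_bigr (fun _ => 1)) // => U _; rewrite expr1n.
rewrite -(pair_bigA _ (fun _ _ => q ^+ (M * n))) /=.
rewrite (eq_bigr (fun _ => q ^+ (M * n) * 2 ^+ n)); last by move=> S _; rewrite -hs mulr_sumr; apply: eq_bigr => T _; rewrite mulr1.
rewrite (eq_bigr (fun _ => q ^+ (M * n) * 2 ^+ n * 1)); last by move=> *; rewrite mulr1.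
rewrite -mulr_sumr hs exprMn exprM.
have -> : (4 : R) ^+ n = 2 ^+ n * 2 ^+ n by rewrite -exprMn -natrM.
by rewrite mulrC mulrA mulrAC.
Qed.
Lemma hd_lemma (n K C M : nat) : (0 < K)%N -> (K * (C + 2 * M * K + 2) <= n)%N ->
  (M * n <= (n %/ K) * (n %/ K - C))%N.
Proof.
move=> K0 hN.
have dge : (C + 2 * M * K + 2 <= n %/ K)%N by rewrite leq_divRL // mulnC.
have e := divn_eq n K; have lt := ltn_pmod n K0.
move: dge e lt; set d := (n %/ K)%N; set m := (n %% K)%N => dge e lt.
have h1 : (M * n <= M * (d * K + K))%N by rewrite leq_mul // e leq_add2l ltnW.
have h2 : (M * (d * K + K) <= d * (2 * M * K))%N.
  have d1 : (1 <= d)%N by apply: leq_trans dge; rewrite addn2.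
  have -> : (M * (d * K + K) = (M * K) * d.+1)%N by ring.
  have -> : (d * (2 * M * K) = (M * K) * (d + d))%N by ring.
  by rewrite leq_mul // -addn1 leq_add2l.
have h3 : (d * (2 * M * K) <= d * (d - C))%N.
  have Cd : (C <= d)%N by apply: leq_trans dge; rewrite -!addnA leq_addr.
  by rewrite leq_mul // leq_subRL // (leq_trans _ dge) // leq_addr.
exact: leq_trans h1 (leq_trans h2 h3).
Qed.

Unset Implicit Arguments.
Set Strict Implicit.

Theorem lemma9 (R : realType) (p : R) (C : nat) :
  0 < p < 1 -> (0 < C)%N ->
  exists c : R, 0 < c /\ exists N : nat, forall n : nat, (N <= n)%N ->
    forall E : bgraph n, deg_bounded C E ->
      1 - expR (- (c * n%:R)) <= Gnnp_prob p (has_pm_avoiding E).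
Proof.
move=> /andP [p0 p1] C0.
have hp01 : 0 <= p <= 1 by rewrite !ltW.
set q := 1 - p.
have qE : q = 1 - p by [].
have q0 : 0 < q by rewrite qE; lra.
have q1 : q < 1 by rewrite qE; lra.
have q01 : 0 < q <= 1 by rewrite q0 ltW.
set r := (1 + q) / 2.
have r1 : r < 1 by rewrite /r; lra.
have r0 : 0 < r by rewrite /r; lra.
set L := Num.Def.archi_bound (6 / p).
have hL : 6 / p < L%:R by apply: archi_boundP; rewrite divr_ge0 ?ltW.
have L0 : (0 < L)%N by rewrite -(ltr0n R); apply: le_lt_trans hL; rewrite divr_ge0 ?ltW.
have LR0 : 0 < (L%:R : R) by rewrite ltr0n.
set y := (L%:R : R)^-1.
have y0 : 0 < y by rewrite invr_gt0.
have y1 : y <= 1 by rewrite invf_le1 // ler1n.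
have hy6 : 6 * y < p.
  by rewrite ltr_pdivrMr // mulrC -ltr_pdivrMr.
set xL := 1 + y.
have hr : q * xL ^+ 2 <= r.
  have hqy : q * y <= y by nra.
  have hqyy : q * (y * y) <= y by nra.
  rewrite /xL /r expr2; nra.
set K := Num.Def.archi_bound ((L%:R : R) * L%:R / q).
have hK' : (L%:R : R) * L%:R / q < K%:R.
  by apply: archi_boundP; rewrite divr_ge0 ?mulr_ge0 ?ler0n ?ltW.
have K0 : (0 < K)%N.
  by rewrite -(ltr0n R); apply: le_lt_trans hK'; rewrite divr_ge0 ?mulr_ge0 ?ler0n ?ltW.
have hK : (L%:R : R) / q <= xL ^+ K.
  apply: le_trans (bern K (ltW y0)).
  have : L%:R / q < K%:R * y.
    by rewrite ltr_pdivlMr // -mulrAC.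
  move=> h; apply: le_trans (ltW h) _; rewrite lerDr; exact: ler01.
set t1 := q^-1 - 1.
have t10 : 0 < t1 by rewrite /t1 subr_gt0 invf_gt1.
set M := Num.Def.archi_bound (4 / (r * t1)).
have hM' : 4 / (r * t1) < M%:R.
  by apply: archi_boundP; rewrite divr_ge0 ?ler0n // mulr_ge0 // ltW.
have hM : 4 * q ^+ M <= r.
  have b := bern M (ltW t10).
  have e1 : 1 + t1 = q^-1 by rewrite /t1 addrC subrK.
  rewrite e1 exprVn in b.
  have Z0 : 0 < q ^+ M by rewrite exprn_gt0.
  have h4 : 4 / r < M%:R * t1.
    have -> : 4 / r = 4 / (r * t1) * t1 by field; rewrite !gt_eqF.
    by rewrite ltr_pM2r.
  have h5 : 4 / r < (q ^+ M)^-1 by apply: lt_le_trans h4 _; apply: le_trans b; rewrite lerDr ler01.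
  have h6 : 4 / r * q ^+ M < (q ^+ M)^-1 * q ^+ M by rewrite ltr_pM2r.
  rewrite mulVf ?gt_eqF // in h6.
  by move: h6; rewrite mulrAC ltr_pdivrMr // mul1r => /ltW.
set t := (1 - r) / 6.
have t0 : 0 < t by rewrite /t; lra.
have t1' : t <= 1 by rewrite /t; lra.
set s := r * (1 + t) ^+ 2.
have s0 : 0 < s by rewrite /s mulr_gt0 // exprn_gt0 // addr_gt0.
have s1 : s < 1.
  have htt : t * t <= t by nra.
  rewrite /s expr2 /t; nra.
exists (- ln s); split; first by rewrite oppr_gt0 ln_lt0 // s0 s1.
set B := (q ^+ C)^-1.
have B0 : 0 < B by rewrite invr_gt0 exprn_gt0.
set N2 := Num.Def.archi_bound (2 * B / (t * t)).
have hN2' : 2 * B / (t * t) < N2%:R.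
  apply: archi_boundP; apply: divr_ge0; apply: mulr_ge0; by rewrite ?ler0n // ltW.
exists (maxn (K * (C + 2 * M * K + 2)) N2).
move=> n; rewrite geq_max => /andP [hN1 hN2] E HE.
set d := (n %/ K)%N.
have hd : (M * n <= d * (d - C))%N by exact: hd_lemma.
have hfail : \sum_(G : bgraph n | ~~ has_pm_avoiding E G) Gnnp_weight p G <= s ^+ n.
  apply: le_trans (@UB R p n (Kt n) (Pk d) (Fk E) (fun G => ~~ has_pm_avoiding E G) hp01 (@bad_cover n d E)) _.
  rewrite big_sumType big_sumType /=.
  have hrow := rows_bound HE q01 L0 (erefl xL) hK K0 (erefl d).
  have hcol := cols_bound HE q01 L0 (erefl xL) hK K0 (erefl d).
  have hrect := rect_bound HE q01 hd.
  rewrite -/q in hrow hcol hrect *.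
  have e1 : (q * xL) ^+ n * xL ^+ n = (q * xL ^+ 2) ^+ n by rewrite -exprMn expr2 mulrA.
  rewrite e1 in hrow hcol.
  have xL0 : 0 <= xL by rewrite /xL; lra.
  have hrn : (q * xL ^+ 2) ^+ n <= r ^+ n.
    apply: lerXn2r; last exact: hr.
      by rewrite nnegrE mulr_ge0 ?exprn_ge0 // ltW.
    by rewrite nnegrE ltW.
  have hrn2 : (4 * q ^+ M) ^+ n <= r ^+ n.
    apply: lerXn2r; last exact: hM.
      by rewrite nnegrE mulr_ge0 ?ler0n ?exprn_ge0 // ltW.
    by rewrite nnegrE ltW.
  have hrowB : n%:R * ((q * xL ^+ 2) ^+ n / q ^+ C) <= n%:R * (r ^+ n * B).
    by apply: ler_wpM2l; rewrite ?ler0n // ler_wpM2r // ltW.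
  have bY := bern n (ltW t0).
  set Y := (1 + t) ^+ n in bY.
  have es : s ^+ n = r ^+ n * (Y * Y) by rewrite /s exprMn -exprM mulnC exprM /Y expr2.
  rewrite es.
  have rn0 : 0 < r ^+ n by rewrite exprn_gt0.
  have nt : 2 * B <= n%:R * (t * t).
    have : 2 * B / (t * t) < n%:R by apply: lt_le_trans hN2' _; rewrite ler_nat.
    by rewrite ltr_pdivrMr ?(mulr_gt0 t0 t0) // => /ltW.
  have key : 2 * n%:R * B + 1 <= Y * Y.
    exact: key_ineq (ler0n _ n) t0 nt bY.
  have hsum := lerD (lerD (le_trans hrow hrowB) (le_trans hcol hrowB)) (le_trans hrect hrn2).
  apply: le_trans hsum _.
  have e2 : n%:R * (r ^+ n * B) + n%:R * (r ^+ n * B) + r ^+ n = r ^+ n * (2 * n%:R * B + 1) by ring.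
  by rewrite e2; apply: ler_wpM2l => //; exact: ltW.
have tot := prob_total p n.
rewrite (bigID (has_pm_avoiding E)) /= in tot.
rewrite /Gnnp_prob.
have -> : expR (- (- ln s * n%:R)) = s ^+ n.
  by rewrite mulNr opprK expRM_natr lnK // posrE.
lra.
Qed.
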